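(* Let $M=(v_1,\dots,v_n)$ be a finite list of nonzero vectors generating $\mathbb{F}_2^3$ which is generic, i.e. $\sum_{i=1}^n v_i\ne\mathbf{0}$. Let $\lambda_u=n-\sum_{i=1}^n(-1)^{u\cdot v_i}$ for $u\in\mathbb{F}_2^3\setminus\{0\}$ and let $d_1\le\cdots\le d_7$ be the numbers $v_2(\lambda_u)$, $u\ne 0$, in increasing order. Then $d_1=d_2=d_3=d_4=1$ and $d_5,d_6,d_7>1$.
   Context: The $\lambda_u$ are the nonzero eigenvalues of the Laplacian of the Cayley graph $G(\mathbb{F}_2^3,M)$ (the matrix indexed by $\mathbb{F}_2^3$ with diagonal entries $n$ and $(u,w)$-entry $-\#\{i:u+v_i=w\}$ for $u\ne w$). $v_2$ is the $2$-adic valuation. *)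

(* Defs.v *)
From HB Require Import structures.
From mathcomp Require Import all_boot all_order all_algebra.
Set Implicit Arguments. Unset Strict Implicit. Unset Printing Implicit Defensive.
Import Order.TTheory GRing.Theory Num.Theory.
Local Open Scope ring_scope.

Notation F23 := 'rV['F_2]_3.

Definition dot (u v : F23) : 'F_2 := (u *m v^T) 0 0.

Definition lambda (M : seq F23) (u : F23) : int :=
  (size M)%:Z - \sum_(v <- M) (if dot u v == 0 then 1 else -1).

Definition dseq (M : seq F23) : seq nat :=
  sort leq [seq logn 2 `|lambda M u|%N | u <- enum [set u : F23 | u != 0]].

(* Main.v *)
Require Import Defs.
From HB Require Import structures.
From mathcomp Require Import all_boot all_order all_algebra.
Import GRing.Theory.
From mathcomp Require Import zify.

Lemma filter1 (L : seq nat) : filter (pred1 1) L = nseq (count (pred1 1) L) 1.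
Proof. by elim: L => //= x L ->; case: eqP => [->|]. Qed.

Lemma sorted_final (L : seq nat) : count (pred1 1) L = 4 -> all (fun d => 0 < d) L ->
  take 4 (sort leq L) = nseq 4 1 /\ all (fun d => 1 < d) (drop 4 (sort leq L)).
Proof.
move=> c1 a1.
set t := sort leq (filter (predC (pred1 1)) L).
have ht : all (fun d => 1 < d) t.
  rewrite (perm_all _ (permEl (perm_sort _ _))) all_filter; apply/allP => x xL /=.
  by have := allP a1 x xL; case: x {xL} => [|[|]].
have -> : sort leq L = [:: 1, 1, 1, 1 & t].
  apply: (sorted_eq leq_trans anti_leq); first exact: (sort_sorted leq_total).
    rewrite /=; case Et: t ht => [|x t'] //= /andP [hx _]; rewrite (ltnW hx) /=.
    by have := sort_sorted leq_total (filter (predC (pred1 1)) L); rewrite -/t Et.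
  rewrite perm_sort -(perm_filterC (pred1 1) L) filter1 c1 /=.
  by do 4! rewrite perm_cons; rewrite perm_sym perm_sort.
by rewrite /= take0 drop0.
Qed.
Local Open Scope ring_scope.

Lemma count_enum_card (T : finType) (A : {pred T}) (p : pred T) :
  count p (enum A) = #|[pred x in A | p x]|.
Proof.
rewrite cardE -size_filter /enum_mem -filter_predI; congr size.
by apply: eq_filter => x; rewrite !inE andbC.
Qed.

Lemma dotS u v : dot u v = \sum_k u 0 k * v 0 k.
Proof. by rewrite /dot !mxE; apply: eq_bigr => k _; rewrite !mxE. Qed.

Lemma dotC u v : dot u v = dot v u.
Proof. by rewrite !dotS; apply: eq_bigr => k _; rewrite mulrC. Qed.

Lemma dot_delta u (j : 'I_3) : dot u (delta_mx 0 j) = u 0 j.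
Proof.
rewrite dotS (bigD1 j) //= big1 ?addr0 => [|k kj]; rewrite mxE /=; first by rewrite eqxx mulr1.
by rewrite (negbTE kj) mulr0.
Qed.

Lemma dotD u v w : dot u (v + w) = dot u v + dot u w.
Proof. by rewrite !dotS -big_split; apply: eq_bigr => k _; rewrite mxE mulrDr. Qed.

Lemma dotZ u k v : dot u (k *: v) = k * dot u v.
Proof. by rewrite !dotS mulr_sumr; apply: eq_bigr => i _; rewrite mxE mulrCA. Qed.

Lemma F2cases (x : 'F_2) : x = 0 \/ x = 1.
Proof. case: x => [[|[|n]]] h; [left|right|]; try exact/val_inj. by []. Qed.

Lemma F2addxx (x : 'F_2) : x + x = 0.
Proof. case: (F2cases x) => ->; first exact: addr0. exact/val_inj. Qed.

Lemma nz_coord (u : F23) : u != 0 -> exists j, u 0 j != 0.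
Proof.
move=> nz; apply/existsP; apply: contraNT nz => /existsPn H.
apply/eqP/rowP => j; rewrite mxE; exact/eqP/negbNE/H.
Qed.

Lemma span_dot0 (u : F23) (M : seq F23) :
  all (fun v => dot u v == 0) M -> forall w, w \in <<M>>%VS -> dot u w = 0.
Proof.
elim: M => [|v M IH] /=.
  by move=> _ w; rewrite span_nil memv0 => /eqP ->; rewrite -(scale0r 0) dotZ mul0r.
case/andP=> /eqP hv hM w; rewrite span_cons => /memv_addP [a /vlineP [k ->] [b hb ->]].
by rewrite dotD dotZ hv mulr0 add0r IH.
Qed.
Definition Nc (M : seq F23) u := count (fun v => dot u v != 0) M.

Lemma sum_sign (M : seq F23) u :
  \sum_(v <- M) (if dot u v == 0 then 1 else -1) = (size M)%:Z - 2%:Z * (Nc M u)%:Z :> int.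
Proof.
rewrite /Nc; elim: M => [|v M IH]; first by rewrite big_nil.
rewrite big_cons IH /=; case: eqP => _ /=; lia.
Qed.

Lemma lambdaE M u : lambda M u = (2 * Nc M u)%N%:Z.
Proof. rewrite /lambda sum_sign; lia. Qed.

Lemma F2_neq0 (a b : 'F_2) : (a + b != 0) = (a != 0) (+) (b != 0).
Proof.
case: (F2cases a) => ->; case: (F2cases b) => ->;
  rewrite ?addr0 ?add0r ?F2addxx ?eqxx ?oner_eq0 //.
Qed.

Lemma odd_Nc M u : odd (Nc M u) = (dot u (\sum_(v <- M) v) != 0).
Proof.
rewrite /Nc; elim: M => [|v M IH].
  by rewrite big_nil /= -(scale0r 0) dotZ mul0r eqxx.
by rewrite big_cons /= oddD IH dotD F2_neq0; case: (dot u v != 0).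
Qed.

Lemma Nc_pos (M : seq F23) u : <<M>>%VS = fullv -> u != 0 -> (0 < Nc M u)%N.
Proof.
move=> hs /nz_coord [j hj]; rewrite /Nc -has_count -[has _ _]negbK -all_predC.
apply: contra hj => /allP H; apply/eqP; rewrite -dot_delta; apply: (@span_dot0 u M).
  by apply/allP => v /H /=; rewrite negbK.
by rewrite hs memvf.
Qed.

Lemma logn_lam M u : (0 < Nc M u)%N ->
  logn 2 `|lambda M u| = (logn 2 (Nc M u)).+1.
Proof.
move=> h; rewrite lambdaE absz_nat lognM // logn_prime //.
Qed.

Lemma logn_odd n : (0 < n)%N -> (logn 2 n == 0%N) = odd n.
Proof.
by move=> h; rewrite eqn0Ngt logn_gt0 mem_primes h dvdn2 /= negbK.
Qed.

Lemma dot0l s : dot 0 s = 0.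
Proof. by rewrite dotC -(scale0r 0) dotZ mul0r. Qed.

Lemma card4 (s : F23) : s != 0 -> #|[set u : F23 | dot u s != 0]| = 4%N.
Proof.
case/nz_coord => j hj; set w : F23 := delta_mx 0 j.
have hw : dot s w = 1 by rewrite dot_delta; case: (F2cases (s 0 j)) hj => ->; rewrite ?eqxx.
set A := [set u : F23 | dot u s != 0].
have eq : (fun u => u + w) @^-1: A = ~: A.
  apply/setP => x; rewrite !inE dotC dotD hw (dotC s x).
  by case: (F2cases (dot x s)) => ->; rewrite ?add0r ?F2addxx ?eqxx ?oner_eq0.
have := cardsC A; rewrite -eq card_preimset; last exact: addIr.
rewrite card_mx card_Fp //; lia.
Qed.

Theorem mainTheorem17 (M : seq 'rV['F_2]_3) :
  all (fun v => v != 0) M ->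
  (<<M>>%VS = fullv) ->
  \sum_(v <- M) v != 0 ->
  take 4 (dseq M) = nseq 4 1%N /\ all (fun d => (1 < d)%N) (drop 4 (dseq M)).
Proof.
move=> _ hs hsum; apply: sorted_final.
  rewrite count_map count_enum_card -(@card4 _ hsum); apply: eq_card => u; rewrite !inE.
  case: (eqVneq u 0) => [->|nz] /=; first by rewrite dot0l eqxx.
  by rewrite logn_lam ?Nc_pos // eqSS logn_odd ?Nc_pos // odd_Nc.
rewrite all_map; apply/allP => u; rewrite mem_enum inE => nz /=.
by rewrite logn_lam ?Nc_pos.
Qed.
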